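(* Let $k\ge 2$, let $G$ be a $K_k$-free graph on $n$ vertices containing an independent set $A$ of size $a$, and let $H$ be a complete multipartite graph. Then there is a complete $(k-1)$-partite graph $G'$ on $n$ vertices such that $\mathcal{N}(H,G)\le \mathcal{N}(H,G')$ and one of the parts of $G'$ has size at least $a$.
   Context: For graphs $H,G$, $\mathcal{N}(H,G)$ denotes the number of subgraphs of $G$ isomorphic to $H$. *)

(* Defs.v *)
From mathcomp Require Import all_boot.
Set Implicit Arguments. Unset Strict Implicit. Unset Printing Implicit Defensive.

Definition simple_graph (V : finType) (e : rel V) : Prop :=
  symmetric e /\ irreflexive e.

Definition Kfree (V : finType) (e : rel V) (k : nat) : Prop :=
  forall S : {set V}, #|S| = k ->
    ~ (forall x y, x \in S -> y \in S -> x != y -> e x y).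

Definition independent (V : finType) (e : rel V) (A : {set V}) : Prop :=
  forall x y, x \in A -> y \in A -> ~~ e x y.

(* Complete multipartite graph: vertices adjacent iff they lie in different
   parts of the partition given by [part]. *)
Definition cmp_rel (W : finType) (P : eqType) (part : W -> P) : rel W :=
  fun x y => part x != part y.

(* A subgraph of (V,eG) is a pair (S,F) of a vertex set S and a set F of
   (ordered, both orientations) edges of G with endpoints in S. *)
Definition is_copy (W V : finType) (eH : rel W) (eG : rel V)
    (p : {set V} * {set V * V}) : bool :=
  let (S, F) := p in
  (F \subset [set e : V * V | [&& eG e.1 e.2, e.1 \in S & e.2 \in S]]) &&
  [exists f : {ffun W -> V},
     [&& injectiveb f, f @: setT == S &
         [forall x, forall y, eH x y == ((f x, f y) \in F)]]].

Definition Ncount (W V : finType) (eH : rel W) (eG : rel V) : nat :=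
  #|[set p : {set V} * {set V * V} | is_copy eH eG p]|.

(* Main.v *)
Require Import Defs.
From mathcomp Require Import all_boot.
From Stdlib Require Import Classical_Prop.
Set Implicit Arguments. Unset Strict Implicit. Unset Printing Implicit Defensive.

Section S.
Variables (W Pt V : finType) (partH : W -> Pt).
Local Notation eH := (cmp_rel partH).

Definition homb (e : rel V) (f : {ffun W -> V}) : bool :=
  injectiveb f && [forall x, forall y, eH x y ==> e (f x) (f y)].
Definition homs (e : rel V) := [set f | homb e f].
Definition hom (e : rel V) := #|homs e|.

Lemma hombP (e : rel V) (f : {ffun W -> V}) : reflect (injective f /\ forall x y, eH x y -> e (f x) (f y)) (homb e f).
Proof.
apply: (iffP andP) => [[/injectiveP fi /forallP H]|[fi H]]; split.
- exact: fi.
- by move=> x y hxy; move/forallP: (H x) => /(_ y); rewrite hxy.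
- exact/injectiveP.
- by apply/forallP=> x; apply/forallP=> y; apply/implyP; apply: H.
Qed.

Lemma eq_hom (e1 e2 : rel V) : e1 =2 e2 -> hom e1 = hom e2.
Proof.
move=> E; apply: eq_card => f; rewrite !inE /homb; congr (_ && _).
by apply: eq_forallb => x; apply: eq_forallb => y; rewrite E.
Qed.

Definition Eset (f : {ffun W -> V}) : {set V * V} :=
  [set q | [exists x, exists y, eH x y && (q == (f x, f y))]].
Definition copy_of (f : {ffun W -> V}) := (f @: [set: W], Eset f).
Definition Aut := [set s : {ffun W -> W} | injectiveb s &&
   [forall x, forall y, eH x y == eH (s x) (s y)]].

Lemma EsetP (f : {ffun W -> V}) (q : V * V) : reflect (exists x y, eH x y /\ q = (f x, f y)) (q \in Eset f).
Proof.
rewrite inE; apply: (iffP existsP) => [[x /existsP [y /andP [h /eqP ->]]]|[x [y [h ->]]]].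
  by exists x, y.
by exists x; apply/existsP; exists y; rewrite h eqxx.
Qed.

Lemma copyP (e : rel V) p : reflect (exists2 f, f \in homs e & p = copy_of f) (is_copy eH e p).
Proof.
case: p => S F; rewrite /is_copy; apply: (iffP andP).
- case=> /subsetP sub /existsP [f /and3P [fi /eqP fS /forallP fF]].
  have fi' := injectiveP _ fi.
  exists f.
    rewrite inE; apply/hombP; split => // x y hxy.
    have := fF x => /forallP /(_ y) /eqP; rewrite hxy => /esym hin.
    by have := sub _ hin; rewrite inE => /and3P [].
  rewrite /copy_of fS; congr pair; apply/setP => q; apply/idP/idP.
  + case: q => q1 q2 qF; have := sub _ qF; rewrite inE /= => /and3P [_ h1 h2].
    rewrite -fS in h1 h2; case/imsetP: h1 => x _ ex; case/imsetP: h2 => y _ ey; subst.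
    apply/EsetP; exists x, y; split => //.
    by have := fF x => /forallP /(_ y) /eqP ->.
  + case/EsetP => x [y [h ->]].
    by have := fF x => /forallP /(_ y) /eqP <-.
- case=> f; rewrite inE => /hombP [fi fh] [-> ->]; split.
  + apply/subsetP => q /EsetP [x [y [h ->]]]; rewrite inE /= fh //.
    by rewrite !imset_f.
  + apply/existsP; exists f; apply/and3P; split => //.
    * exact/injectiveP.
    * apply/forallP => x; apply/forallP => y; apply/eqP; apply/idP/idP.
        by move=> h; apply/EsetP; exists x, y.
      by case/EsetP => x' [y' [h [/fi -> /fi ->]]].
Qed.

Lemma fiber_card (e : rel V) (f0 : {ffun W -> V}) : f0 \in homs e ->
  #|[set f in homs e | copy_of f == copy_of f0]| = #|Aut|.
Proof.
rewrite inE => /hombP [f0i f0h].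
have -> : [set f in homs e | copy_of f == copy_of f0] =
          [set [ffun x => f0 (s x)] | s : {ffun W -> W} in Aut].
  apply/setP => f; rewrite !inE; apply/idP/idP.
  - case/andP => /hombP [fi fh] /eqP [fS fE].
    have ex x : exists y, f0 y == f x.
      have : f x \in f @: [set: W] by rewrite imset_f.
      by rewrite fS => /imsetP [y _ ->]; exists y.
    pose s : {ffun W -> W} := [ffun x => xchoose (ex x)].
    have sP x : f0 (s x) = f x by rewrite ffunE; apply/eqP; exact: (xchooseP (ex x)).
    apply/imsetP; exists s.
      rewrite inE; apply/andP; split.
        by apply/injectiveP => x y /(congr1 f0); rewrite !sP => /fi.
      apply/forallP => x; apply/forallP => y; apply/eqP; apply/idP/idP.
      + move=> h; have : (f x, f y) \in Eset f by apply/EsetP; exists x, y.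
        by rewrite fE -!sP => /EsetP [x' [y' [h' [/f0i -> /f0i ->]]]].
      + move=> h; have : (f0 (s x), f0 (s y)) \in Eset f0 by apply/EsetP; exists (s x), (s y).
        by rewrite -fE !sP => /EsetP [x' [y' [h' [/fi -> /fi ->]]]].
    by apply/ffunP => x; rewrite ffunE sP.
  - case/imsetP => s; rewrite inE => /andP [/injectiveP si /forallP sh] ->.
    have sh' x y : eH x y = eH (s x) (s y) by have := sh x => /forallP /(_ y) /eqP.
    have ssurj y : exists x, s x = y.
      have : y \in codom s by rewrite (inj_card_onto (f:=s) si) ?eqxx.
      by case/codomP => x ->; exists x.
    apply/andP; split.
      apply/hombP; split.
        by move=> x y; rewrite !ffunE => /f0i /si.
      by move=> x y h; rewrite !ffunE; apply: f0h; rewrite -sh'.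
    apply/eqP; rewrite /copy_of; congr pair.
      apply/setP => v; apply/imsetP/imsetP => [[x _ ->]|[y _ ->]].
        by exists (s x); rewrite ?ffunE.
      by case: (ssurj y) => x <-; exists x; rewrite ?ffunE.
    apply/setP => q; apply/EsetP/EsetP => [[x [y [h ->]]]|[x [y [h ->]]]].
      by exists (s x), (s y); rewrite !ffunE -sh'.
    case: (ssurj x) => x1 ex1; case: (ssurj y) => y1 ey1; subst x y.
    exists x1, y1; split; first by rewrite sh'. by rewrite !ffunE.
rewrite card_in_imset // => s1 s2; rewrite !inE => /andP [_ _] _ E.
apply/ffunP => x; apply: f0i; by have := congr1 (fun g : {ffun W -> V} => g x) E; rewrite !ffunE.
Qed.

Lemma Ncount_hom (e : rel V) : Ncount eH e * #|Aut| = hom e.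
Proof.
rewrite /hom /Ncount -[#|homs e|]sum1_card.
rewrite (partition_big copy_of (fun p => p \in [set p | is_copy eH e p])); last first.
  by move=> f hf; rewrite inE; apply/copyP; exists f.
rewrite -sum_nat_const; apply: eq_bigr => p; rewrite inE => /copyP [f0 hf0 ->].
rewrite sum1_card -(fiber_card hf0).
by apply: eq_card => f; rewrite !inE [RHS]unfold_in /= inE.
Qed.

Lemma Aut_gt0 : 0 < #|Aut|.
Proof.
apply/card_gt0P; exists [ffun x => x]; rewrite inE; apply/andP; split.
  by apply/injectiveP => x y; rewrite !ffunE.
by apply/forallP => x; apply/forallP => y; rewrite !ffunE.
Qed.

End S.


Lemma card_sigma (T1 T2 : finType) (P : pred T1) (Q : T1 -> pred T2) :
  #|[set p : T1 * T2 | P p.1 && Q p.1 p.2]| = \sum_(x | P x) #|[set y | Q x y]|.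
Proof.
rewrite -sum1_card (partition_big fst P); last by move=> [a b]; rewrite inE => /andP [].
apply: eq_bigr => x Px.
have pinj : injective (pair x : T2 -> T1 * T2) by move=> u v [].
rewrite sum1_card -(card_imset _ pinj); apply: eq_card => [[a b]].
rewrite [LHS]unfold_in /= inE; apply/andP/imsetP => [[/andP [_ Qab] /eqP ea]|[y]].
  by subst a; exists b; rewrite ?inE.
rewrite inE => Qy [-> ->]; by rewrite /= Px Qy eqxx.
Qed.

Section S.
Variables (W Pt V : finType) (partH : W -> Pt).
Local Notation eH := (cmp_rel partH).
Local Notation homs := (homs partH).
Local Notation hom := (hom partH).

Definition clone (e : rel V) (I : {set V}) (x : V) : rel V :=
  fun u v => if u \in I then (v \notin I) && e x v else if v \in I then e u x else e u v.

Definition indep (e : rel V) (I : {set V}) := forall a b, a \in I -> b \in I -> ~~ e a b.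

Lemma hom_clone (e : rel V) (I : {set V}) (y : V) (f : {ffun W -> V}) : indep e I -> y \in I ->
  f \in homs e -> (forall w, f w \in I -> exists w0, f w0 = y) ->
  f \in homs (clone e I y).
Proof.
move=> ind yI; rewrite !inE => /hombP [fi fh] hy; apply/hombP; split => // w w' hw.
have ew := fh _ _ hw; rewrite /clone.
have same w1 w2 : f w1 \in I -> f w2 \in I -> partH w1 = partH w2.
  move=> h1 h2; apply/eqP; apply: contraNT (ind _ _ h1 h2) => hne; exact: fh.
case: ifP => a_in.
  have b_out : f w' \notin I by apply: contraTN ew => b_in; exact: ind.
  rewrite b_out /=; case: (hy w a_in) => w0 ew0; rewrite -ew0; apply: fh.
  by rewrite /cmp_rel (same w0 w) // ew0.
case: ifP => b_in //.
case: (hy w' b_in) => w0 ew0; rewrite -ew0; apply: fh.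
by rewrite /cmp_rel (same w0 w') // ew0.
Qed.

Lemma clone_perm (e : rel V) (I : {set V}) (y : V) (pi : V -> V) :
  (forall u, u \in I -> pi u \in I) -> (forall u, u \notin I -> pi u = u) ->
  forall u v, clone e I y (pi u) (pi v) = clone e I y u v.
Proof.
move=> pin pout.
have memE u : (pi u \in I) = (u \in I).
  by case: (boolP (u \in I)) => h; [rewrite pin | rewrite pout // (negbTE h)].
move=> u v; rewrite /clone !memE.
case: (boolP (u \in I)) => hu; case: (boolP (v \in I)) => hv //=.
- by rewrite (pout v).
- by rewrite (pout u).
- by rewrite (pout u) ?(pout v).
Qed.


Section Rot.
Variables (I : {set V}) (x0 : V).
Hypothesis x0I : x0 \in I.
Let s := enum I.
Let m := #|I|.
Lemma m_gt0 : 0 < m. Proof. by apply/card_gt0P; exists x0. Qed.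
Lemma size_s : size s = m. Proof. by rewrite /s /m cardE. Qed.
Lemma uniq_s : uniq s. Proof. exact: enum_uniq. Qed.

Definition rho (t : nat) (v : V) : V :=
  if v \in I then nth x0 s ((index v s + t) %% m) else v.

Lemma rho_in t v : v \in I -> rho t v \in I.
Proof.
move=> vI; rewrite /rho vI; have : nth x0 s ((index v s + t) %% m) \in s.
  by apply: mem_nth; rewrite size_s ltn_pmod // m_gt0.
by rewrite mem_enum.
Qed.

Lemma rho_out t v : v \notin I -> rho t v = v.
Proof. by rewrite /rho => /negbTE ->. Qed.

Lemma index_rho t v : v \in I -> index (rho t v) s = (index v s + t) %% m.
Proof.
move=> vI; by rewrite /rho vI index_uniq ?uniq_s // size_s ltn_pmod // m_gt0.
Qed.

Lemma rho_rho t1 t2 v : rho t1 (rho t2 v) = rho (t2 + t1) v.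
Proof.
case: (boolP (v \in I)) => vI; last by rewrite !rho_out.
rewrite {1}/rho rho_in // index_rho // /rho vI modnDml addnA //.
Qed.

Lemma rho_m v : rho m v = v.
Proof.
case: (boolP (v \in I)) => vI; last by rewrite !rho_out.
have vs : v \in s by rewrite mem_enum.
rewrite /rho vI modnDr modn_small ?nth_index //.
by rewrite -size_s index_mem.
Qed.

Lemma rho_inv t v : t <= m -> rho t (rho (m - t) v) = v.
Proof. by move=> h; rewrite rho_rho subnK // rho_m. Qed.
Lemma rho_inv' t v : t <= m -> rho (m - t) (rho t v) = v.
Proof. by move=> h; rewrite rho_rho subnKC // rho_m. Qed.

Lemma rho_inj_t t1 t2 v : v \in I -> t1 < m -> t2 < m -> rho t1 v = rho t2 v -> t1 = t2.
Proof.
move=> vI h1 h2 /(congr1 (fun z => index z s)); rewrite !index_rho //.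
by move/eqP; rewrite eqn_modDl !modn_small // => /eqP.
Qed.


Lemma clone_sum_aux (e : rel V) : indep e I -> m * hom e <= \sum_(x in I) hom (clone e I x).
Proof.
move=> ind.
pose c (g : {ffun W -> V}) := odflt x0 [pick v | (v \in I) && [exists w, g w == v]].
pose G (t : 'I_m) (f : {ffun W -> V}) : {ffun W -> V} := [ffun w => rho t (f w)].
pose F (sf : 'I_m * {ffun W -> V}) := (rho (m - sf.1) (c (G sf.1 sf.2)), G sf.1 sf.2).
have cI g : c g \in I by rewrite /c; case: pickP => [v /andP [] //|_]; exact: x0I.
have cP (g : {ffun W -> V}) (w : W) : g w \in I -> exists w1, c g = g w1.
  rewrite /c; case: pickP => [v /andP [_ /existsP [w1 /eqP <-]]|H] gw; first by exists w1.
  by have := H (g w); rewrite gw /=; move/negbT; rewrite negb_exists => /forallP /(_ w); rewrite eqxx.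
have Gi (t : 'I_m) (f : {ffun W -> V}) : injective f -> injective (G t f).
  move=> fi w1 w2; rewrite !ffunE => E; apply: fi.
  have tm : t <= m by apply: ltnW.
  by rewrite -(rho_inv' (f w1) tm) E rho_inv'.
rewrite -[m in m * _](card_ord m) -cardsT -cardsX.
rewrite (eq_bigr (fun x => #|[set g | g \in homs (clone e I x)]|)); last first.
  by move=> x _; apply: eq_card => g; rewrite inE.
rewrite -(card_sigma (fun x => x \in I) (fun x g => g \in homs (clone e I x))).
rewrite -(card_in_imset (f := F) (D := setX setT (homs e))).
  apply: subset_leq_card; apply/subsetP => _ /imsetP [[t f] hf ->].
  move: hf; rewrite in_setX /= => /andP [_ hf].
  set y := rho (m - t) (c (G t f)).
  have yI : y \in I by apply: rho_in.
  rewrite inE /= yI /=.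
  have hf' : f \in homs (clone e I y).
    apply: hom_clone => // w fwI.
    have gwI : G t f w \in I by rewrite ffunE rho_in.
    case: (cP _ _ gwI) => w1 e1; exists w1.
    by rewrite /y e1 ffunE rho_inv' // ltnW.
  move: hf'; rewrite !inE => /hombP [fi fh]; apply/hombP; split; first exact: Gi.
  move=> w w' h; rewrite !ffunE clone_perm; first exact: fh.
    by move=> u; apply: rho_in.
  by move=> u; apply: rho_out.
move=> [t1 f1] [t2 f2] _ _ [] ey eg.
rewrite /= in ey eg; rewrite eg in ey.
set C := c (G t2 f2) in ey.
have y1 : rho t1 (rho (m - t1) C) = C by rewrite rho_inv // ltnW.
have y2 : rho t2 (rho (m - t2) C) = C by rewrite rho_inv // ltnW.
rewrite ey in y1.
have et : t1 = t2.
  apply: val_inj; apply: (rho_inj_t (v := rho (m - t2) C)); [apply: rho_in; exact: cI | exact: ltn_ord | exact: ltn_ord | by rewrite y1 y2].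
subst t2; suff -> : f1 = f2 by []. apply/ffunP => w.
have := congr1 (fun g : {ffun W -> V} => rho (m - t1) (g w)) eg.
by rewrite /= !ffunE !rho_inv' // ltnW.
Qed.

End Rot.

Lemma clone_sum (e : rel V) (I : {set V}) : indep e I ->
  #|I| * hom e <= \sum_(x in I) hom (clone e I x).
Proof.
case: (set_0Vmem I) => [->|[x0 x0I]]; first by rewrite cards0.
exact: (clone_sum_aux x0I).
Qed.

End S.


Lemma exists_max (T : Type) (P : T -> Prop) (Phi : T -> nat) (B : nat) (x0 : T) :
  P x0 -> (forall x, P x -> Phi x <= B) ->
  exists x, P x /\ forall y, P y -> Phi y <= Phi x.
Proof.
move=> Px0 hB.
suff H : forall n x, B - Phi x < n -> P x -> exists x, P x /\ forall y, P y -> Phi y <= Phi x.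
  exact: (H (B - Phi x0).+1 x0).
elim=> [//|n IH] x hn Px.
case: (classic (exists y, P y /\ Phi x < Phi y)) => [[y [Py lt]]|N].
  apply: (IH y) => //.
  have := hB y Py; move: hn lt; set a := Phi x; set b := Phi y => hn lt hb.
  rewrite ltnS in hn; apply: leq_trans hn; rewrite ltn_sub2l //.
  by apply: leq_trans hb; apply: leq_trans lt.
exists x; split => // y Py; rewrite leqNgt; apply/negP => lt; apply: N; by exists y.
Qed.

Section Gr.
Variable V : finType.

Definition twinb (g : rel V) a b := [forall z, g a z == g b z].
Lemma twinP (g : rel V) a b : reflect (forall z, g a z = g b z) (twinb g a b).
Proof.
apply: (iffP forallP) => H z; first exact/eqP.
by rewrite H.
Qed.

Lemma Kfree_pull (e e' : rel V) (k : nat) (phi : V -> V) :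
  Kfree e k -> irreflexive e -> (forall u v, e' u v -> e (phi u) (phi v)) -> Kfree e' k.
Proof.
move=> Kf irr H S cS clq.
have inj : {in S &, injective phi}.
  move=> u v uS vS euv; apply/eqP; apply: contraT => neq.
  by have := H _ _ (clq _ _ uS vS neq); rewrite euv irr.
apply: (Kf (phi @: S)); first by rewrite card_in_imset.
move=> x y /imsetP [u uS ->] /imsetP [v vS ->] neq.
apply: H; apply: clq => //; apply: contraNneq neq => ->; done.
Qed.

End Gr.

Section Main.
Variables (W Pt V : finType) (partH : W -> Pt) (k : nat) (A : {set V}).
Local Notation hom := (hom partH).
Local Notation clone := (@clone V).

Definition Fam (g : rel V) : Prop :=
  [/\ symmetric g, irreflexive g, Kfree g k, indep g A &
      forall a b, a \in A -> b \in A -> forall z, g a z = g b z].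

Lemma Fam_clone (e : rel V) (I : {set V}) (x : V) :
  Fam e -> indep e I -> (forall a b, a \in A -> b \in A -> (a \in I) = (b \in I)) ->
  Fam (clone e I x).
Proof.
case=> sym irr Kf indA twA indI AI; split.
- move=> u v; rewrite /clone.
  case: (boolP (u \in I)) => hu; case: (boolP (v \in I)) => hv //=; by rewrite sym.
- by move=> u; rewrite /clone; case: ifP => h //; rewrite h.
- apply: (Kfree_pull (phi := fun v => if v \in I then x else v)) Kf irr _.
  move=> u v; rewrite /clone.
  case: (boolP (u \in I)) => hu; case: (boolP (v \in I)) => hv //=; by case/andP.
- move=> a b aA bA; rewrite /clone (AI a b aA bA).
  case: ifP => h; first by rewrite h.
  rewrite h; exact: indA.
- move=> a b aA bA z; rewrite /clone (AI a b aA bA).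
  case: ifP => // _; case: ifP => _; exact: twA.
Qed.

Definition tw (g : rel V) := #|[set p : V * V | twinb g p.1 p.2]|.
Definition Bt := #|{: V * V}|.+1.
Definition Phi (g : rel V) := hom g * Bt + tw g.

Lemma tw_lt : forall g, tw g < Bt.
Proof. by move=> g; rewrite ltnS /tw max_card. Qed.

Lemma Phi_bound g : Phi g <= #|{: {ffun W -> V}}| * Bt + Bt.
Proof.
rewrite /Phi; apply: leq_add; last exact: ltnW (tw_lt g).
by rewrite leq_mul2r max_card orbT.
Qed.

Lemma key (G : rel V) : Fam G -> (forall g, Fam g -> Phi g <= Phi G) ->
  forall u v, ~~ G u v -> twinb G u v.
Proof.
move=> FG Gmax u v nuv.
have [sym irr Kf indA twA] := FG.
case: (boolP (twinb G u v)) => // ntw; exfalso.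
have twT a b c : twinb G a b -> twinb G b c -> twinb G a c.
  by move=> /twinP h1 /twinP h2; apply/twinP => z; rewrite h1 h2.
have twS a b : twinb G a b -> twinb G b a.
  by move=> /twinP h1; apply/twinP => z; rewrite h1.
pose C x := [set z | twinb G z x].
pose I := C u :|: C v.
have Cx x : x \in C x by rewrite inE; apply/twinP.
have hI a : a \in I -> G a u = false /\ G a v = false.
  rewrite !inE => /orP [] /twinP h; rewrite !h //; first by rewrite (negbTE nuv).
  by rewrite sym (negbTE nuv).
have indI : indep G I.
  move=> a b aI bI; have [h1 h2] := hI a aI.
  move: bI; rewrite !inE => /orP [] /twinP h; by rewrite sym h sym ?h1 ?h2.
have Iclosed a b : a \in I -> twinb G b a -> b \in I.
  rewrite !inE => /orP [] h1 h2; apply/orP; [left|right]; exact: twT h2 h1.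
have AI a b : a \in A -> b \in A -> (a \in I) = (b \in I).
  move=> aA bA; apply/idP/idP => h; apply: Iclosed h _; apply/twinP; exact: twA.
have Fc x : Fam (clone G I x) by apply: Fam_clone.
have twc x : tw G < tw (clone G I x).
  apply: proper_card; apply/properP; split.
    apply/subsetP => [[a b]]; rewrite !inE /= => tab.
    apply/twinP => z; rewrite /clone.
    case: (boolP (a \in I)) => aI.
      by rewrite (Iclosed a b aI (twS _ _ tab)).
    have -> : (b \in I) = false.
      apply/negbTE; apply: contra aI => bI; exact: Iclosed bI tab.
    by move/twinP: tab => tab; case: ifP => _; rewrite tab.
  exists (u, v); rewrite !inE //=.
  have uI : u \in I by rewrite in_setU Cx.
  have vI : v \in I by rewrite in_setU Cx orbT.
  by apply/twinP => z; rewrite /clone uI vI.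
have hlt x : hom (clone G I x) < hom G.
  have := Gmax _ (Fc x); rewrite /Phi; rewrite ltnNge; apply: contraL => h.
  rewrite -ltnNge; apply: leq_trans (leq_add (leq_mul h (leqnn Bt)) (twc x)).
  by rewrite addnS.
have hcl x y : twinb G x y -> hom (clone G I x) = hom (clone G I y).
  move/twinP => h; apply: eq_hom => a b; rewrite /clone h //.
  by case: ifP => // _; case: ifP => // _; rewrite sym h sym.
have dis : [disjoint C u & C v].
  rewrite -setI_eq0; apply/eqP/setP => z; rewrite !inE.
  apply/negbTE; apply: contra ntw => /andP [h1 h2]; exact: twT (twS _ _ h1) h2.
have := clone_sum partH indI.
have sumE (F : V -> nat) : \sum_(x in I) F x = \sum_(x in C u) F x + \sum_(x in C v) F x.
  by rewrite -bigU //; apply: eq_bigl => z; rewrite !inE.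
rewrite sumE.
rewrite (eq_bigr (fun _ => hom (clone G I u))); last by move=> x; rewrite inE => /hcl.
rewrite [X in _ + X](eq_bigr (fun _ => hom (clone G I v))); last by move=> x; rewrite inE => /hcl.
rewrite !sum_nat_const.
have -> : #|I| = #|C u| + #|C v|.
  by rewrite -!sum1_card sumE.
rewrite mulnDl; apply/negP; rewrite -ltnNge.
have pu : 0 < #|C u| by apply/card_gt0P; exists u.
have pv : 0 < #|C v| by apply/card_gt0P; exists v.
apply: leq_trans (leq_add (_ : _ < _) (_ : _ <= _)) _; [ | | exact: leqnn]; last first.
  by rewrite leq_pmul2l // ltnW.
by rewrite ltn_pmul2l.
Qed.

End Main.


Lemma Fam_clone0 (V : finType) (k : nat) (A : {set V}) (e : rel V) (x : V) :
  symmetric e -> irreflexive e -> Kfree e k -> indep e A -> Fam k A (clone e A x).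
Proof.
move=> sym irr Kf indA; split.
- move=> u v; rewrite /clone.
  case: (boolP (u \in A)) => hu; case: (boolP (v \in A)) => hv //=; by rewrite sym.
- by move=> u; rewrite /clone; case: ifP => h //; rewrite h.
- apply: (Kfree_pull (phi := fun v => if v \in A then x else v)) Kf irr _.
  move=> u v; rewrite /clone.
  case: (boolP (u \in A)) => hu; case: (boolP (v \in A)) => hv //=; by case/andP.
- by move=> a b aA bA; rewrite /clone aA bA.
- by move=> a b aA bA z; rewrite /clone aA bA.
Qed.

Theorem proposition4p4 (k n a : nat) (V : finType) (eG : rel V)
    (W : finType) (Pt : finType) (partH : W -> Pt) (A : {set V}) :
  2 <= k ->
  simple_graph eG ->
  #|V| = n ->
  Kfree eG k ->
  independent eG A -> #|A| = a ->
  exists p : V -> 'I_(k.-1),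
    Ncount (cmp_rel partH) eG <= Ncount (cmp_rel partH) (cmp_rel p) /\
    exists i : 'I_(k.-1), a <= #|[set v | p v == i]|.
Proof.
move=> k2 [sym irr] _ Kf indA cA.
have indA' : indep eG A by exact: indA.
have [g0 [F0 h0]] : exists g0, Fam k A g0 /\ hom partH eG <= hom partH g0.
  case: (set_0Vmem A) => [A0 | [x0 x0A]].
    exists eG; split => //; split => //; rewrite A0 => ?; by rewrite inE.
  have := clone_sum partH indA'.
  case: (pickP [pred x in A | hom partH eG <= hom partH (clone eG A x)]).
    move=> x /andP [xA hx] _; exists (clone eG A x); split => //.
    exact: Fam_clone0.
  move=> H hs; exfalso.
  have lt : \sum_(x in A) (hom partH (clone eG A x)).+1 <= #|A| * hom partH eG.
    rewrite -sum_nat_const; apply: leq_sum => x xA.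
    by have := H x; rewrite /= xA /= => /negbT; rewrite -ltnNge.
  move: lt; rewrite (eq_bigr (fun x => hom partH (clone eG A x) + 1)); last by move=> x _; rewrite addn1.
  rewrite big_split /= sum_nat_const muln1 => lt.
  have pos : 0 < #|A| by apply/card_gt0P; exists x0.
  have := leq_trans lt hs; rewrite -[X in _ <= X]addn0 leq_add2l leqn0.
  by move/eqP => h; rewrite h in pos.
have [G [FG Gmax]] := exists_max F0 (fun g _ => Phi_bound partH g).
have hG : hom partH g0 <= hom partH G.
  rewrite leqNgt; apply/negP => lt.
  have c1 : Phi partH G < (hom partH G).+1 * Bt V.
    by rewrite /Phi mulSnr ltn_add2l tw_lt.
  have c2 : (hom partH G).+1 * Bt V <= Phi partH g0.
    by rewrite /Phi; apply: leq_trans (leq_addr _ _); rewrite leq_mul2r lt orbT.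
  by have := leq_trans c1 (leq_trans c2 (Gmax _ F0)); rewrite ltnn.
have [symG irrG KfG indG twG] := FG.
have Htw := key FG Gmax.
pose rep v := odflt v [pick u | ~~ G v u].
have repS v : ~~ G v (rep v).
  by rewrite /rep; case: pickP => [u h|_] //=; rewrite irrG.
have repE v w : ~~ G v w -> rep v = rep w.
  move=> /Htw /twinP h; rewrite /rep (eq_pick (Q := [pred u | ~~ G w u])); last first.
    by move=> z; rewrite /= h.
  by case: pickP => [z _ //|H]; have := H w; rewrite /= irrG.
have repN v w : rep v = rep w -> ~~ G v w.
  move=> e; have /Htw /twinP h1 := repS v; have /Htw /twinP h2 := repS w.
  by rewrite h1 e symG h2 irrG.
have GE v w : G v w = (rep v != rep w).
  apply/idP/idP => [h|]; first by apply/eqP => /repN; rewrite h.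
  by apply: contraNT => /repE ->.
have repK v : rep (rep v) = rep v by rewrite -(repE _ _ (repS v)).
pose R := [set rep v | v in [set: V]].
have Rcl : forall x y, x \in R -> y \in R -> x != y -> G x y.
  move=> x y /imsetP [v _ ->] /imsetP [w _ ->] neq.
  by rewrite GE !repK.
have cR : #|R| <= k.-1.
  rewrite leqNgt; apply/negP => lt.
  have kR : k <= #|R| by move: lt k2; case: (k) => [|[|kk]].
  pose S := [set x in take k (enum R)].
  have cS : #|S| = k.
    have u : uniq (take k (enum R)) by rewrite take_uniq ?enum_uniq.
    by rewrite cardsE (card_uniqP u) size_takel // -cardE.
  apply: (KfG S cS) => x y; rewrite !inE => /mem_take; rewrite mem_enum => xR.
  move=> /mem_take; rewrite mem_enum => yR; exact: Rcl.
have ek : k.-1 = (k.-2).+1 by case: (k) k2 => [|[|kk]].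
rewrite ek; rewrite ek in cR.
pose p v : 'I_(k.-2).+1 := inord (index (rep v) (enum R)).
have repR v : rep v \in enum R by rewrite mem_enum imset_f.
have pv v : (p v : nat) = index (rep v) (enum R).
  apply: inordK; apply: leq_trans cR; by rewrite cardE index_mem.
have peq u v : (p u == p v) = (rep u == rep v).
  rewrite -val_eqE /= !pv; apply/eqP/eqP => [h|->] //.
  exact: (index_inj u (repR u) (repR v) h).
have Gp : G =2 cmp_rel p by move=> u v; rewrite /cmp_rel peq GE.
exists p; split.
  rewrite -(leq_pmul2r (Aut_gt0 partH)) !Ncount_hom.
  apply: leq_trans h0 (leq_trans hG _); by rewrite (eq_hom partH Gp).
case: (set_0Vmem A) => [A0|[x0 x0A]].
  by exists ord0; rewrite -cA A0 cards0.
exists (p x0); rewrite -cA; apply: subset_leq_card; apply/subsetP => y yA.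
by rewrite inE peq (repE _ _ (indG _ _ yA x0A)).
Qed.
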